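(* Let $a>b\ge 1$ be integers, $n=a+b$, and let $\breve{K}_{a,b}$ be the Mycielskian of the complete bipartite graph $K_{a,b}$. Then $$E_{\chi^+}(\breve{K}_{a,b})=2+\frac{2a-1}{2a+2b+1},\qquad V_{\chi^+}(\breve{K}_{a,b})=\frac{16a^2+4b^2+8a^2b+8b^2a+24ab+8a+2b}{(2n+1)^3}.$$
   Context: Mycielskian: for a graph $G$ with vertex set $\{v_1,\dots,v_m\}$, its Mycielskian $\breve{G}$ is the graph with vertex set $\{v_1,\dots,v_m\}\cup\{u_1,\dots,u_m\}\cup\{u\}$ (all new, distinct vertices) whose edges are: all edges of $G$; the edge $u_iv_j$ whenever $v_iv_j$ is an edge of $G$; and the edges $uu_i$ for all $i$. Colouring parameters: for a proper colouring $\mathcal{C}=\{c_1,\dots,c_k\}$ of $G$ with colours indexed $1,\dots,k$, let $\theta(c_i)$ be the number of vertices of colour $c_i$ and $f(i)=\theta(c_i)/|V(G)|$. The colouring mean is $\mu_{\mathcal{C}}=\sum_i i\,f(i)$, the colouring variance is $\sum_i (i-\mu_{\mathcal{C}})^2 f(i)$, and the colouring sum is $\sum_i i\,\theta(c_i)$. The $\chi^+$-chromatic mean $E_{\chi^+}(G)$ (resp. $\chi^+$-chromatic variance $V_{\chi^+}(G)$) is the colouring mean (resp. variance) of a proper colouring of $G$ with exactly $\chi(G)$ colours $c_1,\dots,c_{\chi(G)}$ whose colouring sum is maximum among all such colourings. *)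

(* Defs.v *)
From HB Require Import structures.
From mathcomp Require Import all_boot all_order all_algebra.
Set Implicit Arguments. Unset Strict Implicit. Unset Printing Implicit Defensive.
Import Order.TTheory GRing.Theory Num.Theory.

(* A simple graph is a (symmetric, irreflexive) relation e : rel V on a finType V. *)

(* Vertex type of the Mycielskian: Some (inl v) = v_i, Some (inr v) = u_i, None = u. *)
Definition MycV (T : finType) : finType := option (T + T)%type.

Definition myc_rel (T : finType) (e : rel T) : rel (MycV T) :=
  fun x y =>
    match x, y with
    | Some (inl v), Some (inl w) => e v w
    | Some (inr v), Some (inl w) => e v w        (* u_i v_j iff v_i v_j edge *)
    | Some (inl v), Some (inr w) => e w v
    | Some (inr _), None => true
    | None, Some (inr _) => true
    | _, _ => false
    end.

Definition KabV (a b : nat) : finType := ('I_a + 'I_b)%type.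

Definition Kab_rel (a b : nat) : rel (KabV a b) :=
  fun x y =>
    match x, y with
    | inl _, inr _ => true
    | inr _, inl _ => true
    | _, _ => false
    end.

(* Proper colourings with k colours; colour i : 'I_k is the colour c_{i+1}. *)
Definition proper_col (V : finType) (e : rel V) (k : nat) (f : V -> 'I_k) : bool :=
  [forall x, forall y, e x y ==> (f x != f y)].

Definition colorable (V : finType) (e : rel V) (k : nat) : bool :=
  [exists f : {ffun V -> 'I_k}, proper_col e f].

(* Chromatic number: least k <= |V| admitting a proper k-colouring
   (always exists for loopless graphs). *)
Definition chi (V : finType) (e : rel V) : nat :=
  find (colorable e) (iota 0 #|V|.+1).

Definition theta (V : finType) (k : nat) (f : V -> 'I_k) (i : 'I_k) : nat :=
  #|[pred x | f x == i]|.

Definition col_sum (V : finType) (k : nat) (f : V -> 'I_k) : nat :=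
  \sum_(i < k) i.+1 * theta f i.

Local Open Scope ring_scope.

Definition col_mean (V : finType) (k : nat) (f : V -> 'I_k) : rat :=
  \sum_(i < k) (i.+1)%:R * ((theta f i)%:R / (#|V|)%:R).

Definition col_var (V : finType) (k : nat) (f : V -> 'I_k) : rat :=
  \sum_(i < k) ((i.+1)%:R - col_mean f) ^+ 2 * ((theta f i)%:R / (#|V|)%:R).

Local Close Scope ring_scope.

Definition chi_plus_colouring (V : finType) (e : rel V) (f : V -> 'I_(chi e)) : Prop :=
  proper_col e f /\
  forall g : V -> 'I_(chi e), proper_col e g -> (col_sum g <= col_sum f)%N.

(* Main.v *)
Require Import Defs.
From HB Require Import structures.
From mathcomp Require Import all_boot all_order all_algebra.
From mathcomp Require Import zify ring lra.
Import Order.TTheory GRing.Theory Num.Theory.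
Set Implicit Arguments. Unset Strict Implicit.

Lemma big_opt (T : finType) (F : option T -> nat) :
  (\sum_(x : option T) F x = F None + \sum_(x : T) F (Some x))%N.
Proof.
rewrite (bigD1 None) //=; congr (_ + _).
rewrite (reindex_omap Some id); last by case.
by apply: eq_bigl => j; rewrite /= eqxx.
Qed.

Lemma theta_sum (V : finType) k (f : V -> 'I_k) c :
  theta f c = \sum_x (f x == c : nat).
Proof.
rewrite /theta -sum1_card big_mkcond /=; apply: eq_bigr => x _.
by rewrite inE; case: eqP.
Qed.

Lemma sum_le (I : finType) (p : pred I) : (\sum_i (p i : nat) <= #|I|)%N.
Proof.
have -> : #|I| = \sum_(i : I) 1 by rewrite sum1_card.
by apply: leq_sum => i _; exact: leq_b1.
Qed.

Lemma sum_excl (I J : finType) (p : pred I) (q : pred J) :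
  (forall i j, p i -> q j -> False) ->
  (\sum_i (p i : nat) = 0 \/ \sum_j (q j : nat) = 0)%N.
Proof.
move=> H; case: (pickP p) => [i pi|np].
  right; apply: big1 => j _; case qj: (q j) => //; exfalso; exact: H pi qj.
by left; apply: big1 => i _; rewrite np.
Qed.

Section X.
Variables (a b : nat).
Let V := MycV (KabV a b).
Let e := myc_rel (@Kab_rel a b).

Lemma prop_edge k (f : V -> 'I_k) : proper_col e f -> forall x y, e x y -> nat_of_ord (f x) <> nat_of_ord (f y).
Proof.
rewrite /proper_col => /forallP H x y exy hv; move: (H x) => /forallP /(_ y); rewrite exy /=.
by rewrite (val_inj hv) eqxx.
Qed.

Lemma theta_split k (f : V -> 'I_k) c : theta f c =
  ((f None == c) + ((\sum_i (f (Some (inl (inl i))) == c : nat)) + 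
    (\sum_i (f (Some (inl (inr i))) == c : nat))) +
  ((\sum_i (f (Some (inr (inl i))) == c : nat)) + 
    (\sum_i (f (Some (inr (inr i))) == c : nat))))%N.
Proof. rewrite theta_sum. rewrite (@big_opt _ (fun x => (f x == c : nat))). rewrite !big_sumType. exact: addnA. Qed.


Lemma sum_le_ord n (p : 'I_n -> bool) : (\sum_i (p i : nat) <= n)%N.
Proof. by move: (@sum_le _ p); rewrite card_ord. Qed.

Lemma indep_bound k (f : V -> 'I_k) c : (1 <= b)%N -> (b < a)%N -> proper_col e f ->
  (theta f c <= 2 * a)%N.
Proof.
move=> hb hab Pf; have E := prop_edge Pf.
rewrite theta_split.
set SA := \sum_i _ . set SB := \sum_i _ . set SC := \sum_i _ . set SD := \sum_i _ .
have lA : (SA <= a)%N by exact: sum_le_ord.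
have lB : (SB <= b)%N by exact: sum_le_ord.
have lC : (SC <= a)%N by exact: sum_le_ord.
have lD : (SD <= b)%N by exact: sum_le_ord.
have xAB : SA = 0%N \/ SB = 0%N.
  apply: sum_excl => i j /eqP h1 /eqP h2.
  by apply: (E (Some (inl (inl i))) (Some (inl (inr j)))) => //; rewrite h1 h2.
have xAD : SA = 0%N \/ SD = 0%N.
  apply: sum_excl => i j /eqP h1 /eqP h2.
  by apply: (E (Some (inl (inl i))) (Some (inr (inr j)))) => //; rewrite h1 h2.
have xBC : SB = 0%N \/ SC = 0%N.
  apply: sum_excl => i j /eqP h1 /eqP h2.
  by apply: (E (Some (inl (inr i))) (Some (inr (inl j)))) => //; rewrite h1 h2.
case: (boolP (f None == c)) => hN /=; last by lia.
have zC : SC = 0%N.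
  apply: big1 => i _; case: eqP => // h; exfalso.
  by apply: (E None (Some (inr (inl i)))) => //; rewrite h (eqP hN).
have zD : SD = 0%N.
  apply: big1 => i _; case: eqP => // h; exfalso.
  by apply: (E None (Some (inr (inr i)))) => //; rewrite h (eqP hN).
lia.
Qed.

Lemma cyc k (f : V -> 'I_k) : (0 < a)%N -> (0 < b)%N -> proper_col e f ->
  (3 <= k)%N /\ (k = 3 -> exists x, nat_of_ord (f x) = 0%N).
Proof.
move=> ha hb Pf; have E := prop_edge Pf.
pose i0 := Ordinal ha; pose j0 := Ordinal hb.
have h1 := E (Some (inr (inl i0))) None isT.
have h2 := E None (Some (inr (inr j0))) isT.
have h3 := E (Some (inr (inr j0))) (Some (inl (inl i0))) isT.
have h4 := E (Some (inl (inl i0))) (Some (inl (inr j0))) isT.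
have h5 := E (Some (inl (inr j0))) (Some (inr (inl i0))) isT.
have l1 := ltn_ord (f (Some (inr (inl i0)))).
have l2 := ltn_ord (f None).
have l3 := ltn_ord (f (Some (inr (inr j0)))).
have l4 := ltn_ord (f (Some (inl (inl i0)))).
have l5 := ltn_ord (f (Some (inl (inr j0)))).
split; first by lia.
move=> k3.
have : (nat_of_ord (f (Some (inr (inl i0)))) = 0%N \/ nat_of_ord (f None) = 0%N \/
   nat_of_ord (f (Some (inr (inr j0)))) = 0%N \/ nat_of_ord (f (Some (inl (inl i0)))) = 0%N \/
   nat_of_ord (f (Some (inl (inr j0)))) = 0%N) by lia.
by case=> [h|[h|[h|[h|h]]]]; eexists; exact: h.
Qed.

Definition g3 (x : V) : 'I_3 :=
  match x with
  | None => @Ordinal 3 0 isT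
  | Some (inl (inl _)) | Some (inr (inl _)) => @Ordinal 3 2 isT
  | _ => @Ordinal 3 1 isT
  end.

Lemma g3_ok x y : e x y ==> (g3 x != g3 y).
Proof. by case: x => [[[?|?]|[?|?]]|]; case: y => [[[?|?]|[?|?]]|]. Qed.

Lemma g3_proper : proper_col e g3.
Proof. by apply/forallP => x; apply/forallP => y; exact: g3_ok. Qed.

Lemma cardV : #|V| = (a + b + (a + b)).+1.
Proof. by rewrite /V /MycV card_option card_sum /KabV card_sum !card_ord. Qed.

Lemma chi3 : (0 < a)%N -> (0 < b)%N -> chi e = 3.
Proof.
move=> ha hb.
have nc : forall k, (k < 3)%N -> colorable e k = false.
  move=> k hk; apply/negbTE/existsP => -[g Pg]; have [] := cyc ha hb Pg; lia.
have c3 : colorable e 3.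
  apply/existsP; exists [ffun x => g3 x].
  by apply/forallP => x; apply/forallP => y; rewrite !ffunE; exact: g3_ok.
rewrite /chi cardV.
have -> : (a + b + (a + b)).+2 = (4 + (a + b + (a + b)).-2)%N by lia.
by rewrite iotaD /= (nc 0) // (nc 1) // (nc 2) // c3.
Qed.

Lemma col_sum_g3 : col_sum g3 = (6 * a + 4 * b + 1)%N.
Proof.
rewrite /col_sum !big_ord_recl big_ord0 !theta_split /=.
rewrite !big_const_ord !iter_addn_0 /bump /=; lia.
Qed.

Lemma total k (f : V -> 'I_k) : (\sum_(i < k) theta f i)%N = #|V|.
Proof.
rewrite (eq_bigr _ (fun i _ => theta_sum f i)) exchange_big /=.
rewrite -sum1_card; apply: eq_bigr => x _.
rewrite (bigD1 (f x)) //= eqxx big1 // => i /negbTE.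
by rewrite eq_sym => ->.
Qed.

End X.

Local Open Scope ring_scope.

Theorem theorem3p3 (a b : nat) (hb : (1 <= b)%N) (hab : (b < a)%N)
  (f : MycV (KabV a b) -> 'I_(chi (myc_rel (@Kab_rel a b))))
  (hf : chi_plus_colouring f) :
  col_mean f = 2 + (2 * a%:R - 1) / (2 * a%:R + 2 * b%:R + 1) :> rat /\
  col_var f =
    (16 * a%:R ^+ 2 + 4 * b%:R ^+ 2 + 8 * a%:R ^+ 2 * b%:R + 8 * b%:R ^+ 2 * a%:R
     + 24 * a%:R * b%:R + 8 * a%:R + 2 * b%:R)
    / (2 * (a + b)%:R + 1) ^+ 3 :> rat.
Proof.
have ha : (0 < a)%N by lia.
have hb0 : (0 < b)%N by lia.
move: f hf; rewrite /chi_plus_colouring.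
move: (chi3 ha hb0); move: (chi _) => k Hk; subst k.
move=> f [Pf Mf].
have cs := Mf _ (g3_proper a b).
rewrite col_sum_g3 in cs.
have tot := total f. rewrite cardV in tot.
have ub := fun c => indep_bound c hb hab Pf.
have [_ /(_ erefl) [x0 hx0]] := cyc ha hb0 Pf.
move: cs tot; rewrite /col_sum !big_ord_recl !big_ord0 => cs tot.
have lb : (0 < theta f ord0)%N.
  by apply/card_gt0P; exists x0; rewrite inE /=; apply/eqP/val_inj.
have u0 := ub ord0; have u1 := ub (lift ord0 ord0); have u2 := ub (lift ord0 (lift ord0 ord0)).
move: cs; rewrite /= /bump /= => cs.
have [H0 [H1 H2]] : theta f ord0 = 1%N /\ theta f (lift ord0 ord0) = (2 * b)%N /\
   theta f (lift ord0 (lift ord0 ord0)) = (2 * a)%N.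
  lia.
rewrite /col_var /col_mean !big_ord_recl !big_ord0 cardV H0 H1 H2 /= /bump /=.
rewrite -[(a + b + (a + b)).+1]addn1 !natrD ?natrM.
have hA : (0 <= a%:R :> rat) by exact: ler0n.
have hB : (0 <= b%:R :> rat) by exact: ler0n.
have hD : (2 * a%:R + 2 * b%:R + 1 != 0 :> rat) by apply/eqP; lra.
have hD' : (a%:R + b%:R + (a%:R + b%:R) + 1 != 0 :> rat) by apply/eqP; lra.
have hD'' : (2 * (a%:R + b%:R) + 1 != 0 :> rat) by apply/eqP; lra.
split; field.
all: assumption.
Qed.
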